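(* For every integer $d \geq 2$, $\mathsf {Brac}_{d,1}=\mathsf {Brac}_d$.
   Context: $\Delta_d=\{\alpha\in\mathbb R^d:\alpha_i\ge0,\ \sum_i\alpha_i=1\}$. The bracelet condition set is $\mathsf{Brac}_d=\{(\alpha,\beta)\in\Delta_d^2:\ \forall i\in[d],\ \sqrt{\alpha_i\beta_i}\le\sum_{j\ne i}\sqrt{\alpha_j\beta_j}\}$. For $s\ge1$, the generalized bracelet condition set $\mathsf{Brac}_{d,s}$ is the set of $(\alpha,\beta)\in\Delta_d^2$ for which there exist $A_1,\dots,A_d,B_1,\dots,B_d\in M_s(\mathbb C)$ with $\sum_i A_iA_i^*=\sum_iB_iB_i^*=I_s$, $\sum_iA_iB_i^*=0$, and $\tfrac1s\|A_i\|_F^2=\alpha_i$, $\tfrac1s\|B_i\|_F^2=\beta_i$ for all $i\in[d]$, where $\|X\|_F=\operatorname{Tr}(XX^* )^{1/2}$. *)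

(* Defs.v *)
From HB Require Import structures.
From mathcomp Require Import all_boot all_order all_algebra.
From mathcomp Require Import reals.
From mathcomp Require Import complex.
Set Implicit Arguments. Unset Strict Implicit. Unset Printing Implicit Defensive.
Import Order.TTheory GRing.Theory Num.Theory.
Local Open Scope ring_scope.

Definition simplex (R : realType) (d : nat) (a : 'I_d -> R) : Prop :=
  (forall i, 0 <= a i) /\ \sum_(i < d) a i = 1.

Definition Brac (R : realType) (d : nat) (a b : 'I_d -> R) : Prop :=
  simplex a /\ simplex b /\
  forall i : 'I_d,
    Num.sqrt (a i * b i) <= \sum_(j < d | j != i) Num.sqrt (a j * b j).

Definition adjmx (R : realType) (m n : nat) (X : 'M[complex R]_(m, n)) : 'M[complex R]_(n, m) :=
  map_mx Num.conj (X^T).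

Definition frob2 (R : realType) (s : nat) (X : 'M[complex R]_s) : complex R :=
  \tr (X *m adjmx X).

Definition Brac_gen (R : realType) (d s : nat) (a b : 'I_d -> R) : Prop :=
  simplex a /\ simplex b /\
  exists A B : 'I_d -> 'M[complex R]_s,
    \sum_(i < d) A i *m adjmx (A i) = 1%:M /\
    \sum_(i < d) B i *m adjmx (B i) = 1%:M /\
    \sum_(i < d) A i *m adjmx (B i) = 0 /\
    (forall i, frob2 (A i) / s%:R = (a i)%:C%C) /\
    (forall i, frob2 (B i) / s%:R = (b i)%:C%C).

(* Main.v *)
Require Import Defs.
From HB Require Import structures.
From mathcomp Require Import all_boot all_order all_algebra.
From mathcomp Require Import reals complex.
From mathcomp Require Import ring lra zify.
Import Order.TTheory GRing.Theory Num.Theory.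
Local Open Scope ring_scope.

Section S.
Variable R : realType.

Lemma unit_dir (X Y m : R) : 0 <= m -> X^+2 + Y^+2 = m^+2 ->
  exists u v : R, u^+2 + v^+2 = 1 /\ m * u = X /\ m * v = Y.
Proof.
move=> m0 h; have [me|mn0] := eqVneq m 0; first rewrite me.
  rewrite me expr0n /= in h.
  have sX := sqr_ge0 X; have sY := sqr_ge0 Y.
  have hX : X = 0 by apply/eqP; rewrite -sqrf_eq0; apply/eqP; lra.
  have hY : Y = 0 by apply/eqP; rewrite -sqrf_eq0; apply/eqP; lra.
  by exists 1, 0; rewrite hX hY !mul0r; split=> //; rewrite expr1n expr0n addr0.
exists (X / m), (Y / m); split; last by split; field.
by rewrite !expr_div_n -mulrDl h divff // sqrf_eq0.
Qed.

Lemma triangle (p q t : R) : 0 <= p -> 0 <= q -> 0 <= t ->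
  p <= q + t -> q <= p + t -> t <= p + q ->
  exists x1 y1 x2 y2 x3 y3 : R,
    [/\ x1^+2 + y1^+2 = 1, x2^+2 + y2^+2 = 1, x3^+2 + y3^+2 = 1,
        p * x1 + q * x2 + t * x3 = 0 & p * y1 + q * y2 + t * y3 = 0].
Proof.
move=> p0 q0 t0 h1 h2 h3.
have [pe|pn0] := eqVneq p 0.
  have qt : q = t by rewrite pe in h2 h3; lra.
  exists 1, 0, 1, 0, (-1), 0; rewrite pe qt; split; rewrite ?expr1n ?expr0n ?sqrrN ?expr1n ?addr0; lra.
have pp : 0 < p by rewrite lt_def pn0.
pose x := (t^+2 - p^+2 - q^+2) / (2 * p).
have hx : x^+2 <= q^+2.
  rewrite -ler_sqrt ?sqr_ge0 // !sqrtr_sqr (ger0_norm q0) ler_norml.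
  have hx2 : x * (2 * p) = t^+2 - p^+2 - q^+2 by rewrite /x mulfVK // mulf_neq0 // pnatr_eq0.
  apply/andP; split.
    rewrite -(ler_pM2r (_ : 0 < 2 * p)); last by rewrite mulr_gt0.
    rewrite hx2; nra.
  rewrite -(ler_pM2r (_ : 0 < 2 * p)); last by rewrite mulr_gt0.
  rewrite hx2; nra.
pose y := Num.sqrt (q^+2 - x^+2).
have hy : y^+2 = q^+2 - x^+2 by rewrite sqr_sqrtr // subr_ge0.
have hx2 : x * (2 * p) = t^+2 - p^+2 - q^+2 by rewrite /x mulfVK // mulf_neq0 // pnatr_eq0.
have E2 : x^+2 + y^+2 = q^+2 by rewrite hy; ring.
have [u2 [v2 [n2 [e2 e2']]]] := @unit_dir x y q q0 E2.
have E3 : (- p - x)^+2 + (-y)^+2 = t^+2 by rewrite sqrrN hy; nra.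
have [u3 [v3 [n3 [e3 e3']]]] := @unit_dir (-p-x) (-y) t t0 E3.
exists 1, 0, u2, v2, u3, v3; split=> //; rewrite ?expr1n ?expr0n ?addr0 //.
  by rewrite e2 e3; ring.
by rewrite e2' e3'; ring.
Qed.

Lemma split3 (d : nat) (F : 'I_d -> R) (k : 'I_d) :
  \sum_i F i = \sum_(i : 'I_d | (i < k)%N) F i + F k + \sum_(i : 'I_d | (k < i)%N) F i.
Proof.
rewrite (bigID (fun i : 'I_d => (i < k)%N)) /= -addrA; congr (_ + _).
rewrite (bigD1 k) /= ?ltnn //; congr (_ + _). apply: eq_bigl => i.
by case: (ltngtP i k) => h; rewrite /= -?val_eqE /= ?h; try lia. 
Qed.

Lemma polygon d (r : 'I_d -> R) : (forall i, 0 <= r i) ->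
  (forall i, r i <= \sum_(j | j != i) r j) ->
  exists x y : 'I_d -> R, (forall i, x i ^+ 2 + y i ^+ 2 = 1) /\
     \sum_i r i * x i = 0 /\ \sum_i r i * y i = 0.
Proof.
case: d r => [|d] r r0 hr.
  by exists (fun _ => 1), (fun _ => 0); rewrite !big_ord0; split => // -[].
set S := \sum_i r i.
have S0 : 0 <= S by apply: sumr_ge0.
pose pre n := \sum_(i : 'I_d.+1 | (i <= n)%N) r i.
have exP : exists n, (n < d.+1)%N && (S <= 2 * pre n).
  exists d; rewrite ltnSn /=.
  have -> : pre d = S by apply: eq_bigl => i; rewrite -ltnS ltn_ord.
  lra.
case: (ex_minnP exP) => k /andP[kd hk] kmin.
pose K := Ordinal kd.
pose p := \sum_(i : 'I_d.+1 | (i < K)%N) r i.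
pose q := r K.
pose t := \sum_(i : 'I_d.+1 | (K < i)%N) r i.
have hS : S = p + q + t := split3 _ r K.
have hSq : \sum_(j | j != K) r j = S - q.
  by rewrite /S [in RHS](bigD1 K) //= /q [r K + _]addrC addrK.
have hpre : pre k = p + q.
  rewrite /pre (bigD1 K) /= ?leqnn // addrC; congr (_ + _); apply: eq_bigl => i.
  by rewrite /= -val_eqE /= ltn_neqAle andbC.
have hp : 2 * p <= S.
  case: k kd hk kmin @K @p @q @t hS hSq hpre => [|k'] kd hk kmin K p q t hS hSq hpre.
    by rewrite /p big_pred0 // mulr0.
  have := kmin k'; rewrite ltnn (ltn_trans (ltnSn k') kd) /=.
  have -> : pre k' = p by apply: eq_bigl => i.
  case h: (S <= 2 * p); first by move=> /(_ isT).
  by move=> _; move/negbT: h; rewrite -ltNge => h; lra.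
have hq : q <= S - q by rewrite -hSq; apply: hr.
have p0 : 0 <= p by apply: sumr_ge0.
have t0 : 0 <= t by apply: sumr_ge0.
have [x1 [y1 [x2 [y2 [x3 [y3 [n1 n2 n3 ex ey]]]]]]] :=
  @triangle p q t p0 (r0 K) t0 (ltac:(lra)) (ltac:(lra)) (ltac:(lra)).
exists (fun i : 'I_d.+1 => if (i < K)%N then x1 else if i == K then x2 else x3).
exists (fun i : 'I_d.+1 => if (i < K)%N then y1 else if i == K then y2 else y3).
split; first by move=> i; case: ifP => _ //; case: ifP.
have side : forall (z1 z2 z3 : R), \sum_i r i * (if (i < K)%N then z1 else if i == K then z2 else z3)
   = p * z1 + q * z2 + t * z3.
  move=> z1 z2 z3; rewrite (split3 _ _ K) ltnn eqxx.
  rewrite /p /t !big_distrl /=; congr (_ + _ + _).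
    by apply: eq_bigr => i ->.
  apply: eq_bigr => i h; rewrite ltnNge ltnW //=.
  by case: eqP => // e; move: h; rewrite e ltnn.
by rewrite !side.
Qed.

Lemma sum_mx1 d (X Y : 'I_d -> 'M[complex R]_1) :
  \sum_(i < d) X i *m adjmx (Y i) = (\sum_(i < d) X i 0 0 * Num.conj (Y i 0 0))%:M.
Proof.
apply/matrixP=> i j; rewrite !ord1 summxE mxE eqxx mulr1n.
by apply: eq_bigr => k _; rewrite mxE big_ord1 !mxE.
Qed.

Lemma frob1 (X : 'M[complex R]_1) : frob2 X / 1%:R = X 0 0 * Num.conj (X 0 0).
Proof. by rewrite divr1 /frob2 /mxtrace big_ord1 mxE big_ord1 !mxE. Qed.

Lemma m11 (c : complex R) : (c%:M : 'M_1) 0 0 = c.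
Proof. by rewrite mxE eqxx mulr1n. Qed.

Lemma sumC (I : Type) (s : seq I) (P : pred I) (u v : I -> R) :
  \sum_(j <- s | P j) (u j +i* v j)%C = ((\sum_(j <- s | P j) u j) +i* (\sum_(j <- s | P j) v j))%C.
Proof.
elim: s => [|h s IH]; first by rewrite !big_nil.
by rewrite !big_cons; case: (P h); rewrite IH.
Qed.

Lemma normz (z : complex R) (k : R) : 0 <= k -> z * Num.conj z = k%:C%C -> `|z| = (Num.sqrt k)%:C%C.
Proof.
move=> k0 h; rewrite normc_def; congr (_%:C%C); congr (Num.sqrt _).
apply: complexI; rewrite add_Re2_Im2 -h.
by rewrite normCK.
Qed.
End S.

Theorem proposition3p4 (R : realType) (d : nat) : (2 <= d)%N ->
  forall a b : 'I_d -> R, Brac_gen 1 a b <-> Brac a b.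
Proof.
move=> d2 a b; split.
  case=> sa [sb [A [B [hA [hB [hAB [ha hb]]]]]]]; split=> //; split=> // i.
  pose z j := A j 0 0 * Num.conj (B j 0 0).
  have z0 : \sum_j z j = 0.
    by move: hAB; rewrite sum_mx1 => /(congr1 (fun M : 'M_1 => M 0 0)); rewrite m11 mxE.
  have nz : forall j, `|z j| = (Num.sqrt (a j * b j))%:C%C.
    move=> j; apply: normz; first by rewrite mulr_ge0 //; [case: sa | case: sb].
    rewrite /z rmorphM /= conjCK mulrACA -[Num.conj (B j 0 0) * _]mulrC.
    by rewrite -frob1 -frob1 ha hb rmorphM.
  rewrite -lecR rmorph_sum /= -nz.
  under eq_bigr => j _ do rewrite -nz.
  have -> : z i = - \sum_(j | j != i) z j.
    by move: z0; rewrite (bigD1 i) //= => h; apply/eqP; rewrite -addr_eq0 h.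
  by rewrite normrN ler_norm_sum.
case=> sa [sb hbr]; split=> //; split=> //.
have [x [y [nxy [sx sy]]]] := @polygon R d (fun j => Num.sqrt (a j * b j)) (fun j => sqrtr_ge0 _) hbr.
pose w j := (x j +i* y j)%C.
pose al j := (Num.sqrt (a j))%:C%C * w j.
pose be j := (Num.sqrt (b j))%:C%C.
have ha : forall j, al j * Num.conj (al j) = (a j)%:C%C.
  move=> j; rewrite /al /w /=; apply/eqP; rewrite eq_complex /=; apply/andP; split; apply/eqP.
    have := nxy j; have: Num.sqrt (a j) ^+ 2 = a j by rewrite sqr_sqrtr //; case: sa.
    move=> e1 e2; rewrite -[in RHS]e1 -[in RHS](mulr1 (_ ^+ 2)) -e2; ring.
  ring.
have hb : forall j, be j * Num.conj (be j) = (b j)%:C%C.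
  move=> j; rewrite /be /=; apply/eqP; rewrite eq_complex /=; apply/andP; split; apply/eqP.
    have: Num.sqrt (b j) ^+ 2 = b j by rewrite sqr_sqrtr //; case: sb.
    by move=> e1; rewrite -[in RHS]e1 oppr0 mul0r subr0 expr2.
  by rewrite oppr0 mulr0 mul0r addr0.
exists (fun j => (al j)%:M), (fun j => (be j)%:M).
split.
  rewrite sum_mx1; congr (_%:M).
  under eq_bigr => j _ do rewrite !m11 ha.
  by rewrite -rmorph_sum /=; case: sa => _ ->.
split.
  rewrite sum_mx1; congr (_%:M).
  under eq_bigr => j _ do rewrite !m11 hb.
  by rewrite -rmorph_sum /=; case: sb => _ ->.
split.
  rewrite sum_mx1.
  rewrite (eq_bigr (fun i => ((Num.sqrt (a i * b i) * x i) +i* (Num.sqrt (a i * b i) * y i))%C)); last first.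
    move=> j _; rewrite !m11 /al /be /w sqrtrM; last by case: sa.
    apply/eqP; rewrite eq_complex /=; apply/andP; split; apply/eqP; ring.
  by rewrite sumC sx sy; apply/matrixP => i j; rewrite !mxE !ord1 /= mul0rn.
split=> j; rewrite frob1 m11; [exact: ha | exact: hb].
Qed.
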